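(* A $*$-ring $R$ is a generalized Rickart $*$-ring if and only if $R$ has a unity element and for each $x\in R$ there exist a projection $e\in R$ and $n\in\mathbb N$ such that $r(x^n)=r(e)$.
   Context: A $*$-ring is an associative ring $R$ with an involution $x\mapsto x^*$ (additive, $(xy)^*=y^*x^*$, $x^{**}=x$). A projection is an element $e$ with $e=e^*=e^2$. For $a\in R$, $r(a)=\{b\in R: ab=0\}$. $R$ is a generalized Rickart $*$-ring if for every $x\in R$ there exist a positive integer $n$ and a projection $g$ with $r(x^n)=gR$. *)

(* Defs.v *)
(* A *-ring here is a possibly NON-unital associative ring
   (an additive group with an associative, bi-distributive multiplication)
   equipped with an involution; the existence of a unity is part of the
   theorem's conclusion, so it cannot be built into the structure. *)
From mathcomp Require Import all_boot all_algebra.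
Set Implicit Arguments. Unset Strict Implicit. Unset Printing Implicit Defensive.
Import GRing.Theory.
Local Open Scope ring_scope.

Definition star_rng (R : zmodType) (mul : R -> R -> R) (star : R -> R) : Prop :=
  (forall x y z, mul x (mul y z) = mul (mul x y) z) /\
  (forall x y z, mul x (y + z) = mul x y + mul x z) /\
  (forall x y z, mul (x + y) z = mul x z + mul y z) /\
  (forall x y, star (x + y) = star x + star y) /\
  (forall x y, star (mul x y) = mul (star y) (star x)) /\
  (forall x, star (star x) = x).

(* x ^ n for n >= 1 (the value for n = 0 is irrelevant: it is always
   guarded by 0 < n below): x^n = x * (x * ... x), n factors. *)
Definition rpow (R : zmodType) (mul : R -> R -> R) (x : R) (n : nat) : R :=
  iter n.-1 (mul x) x.

Definition is_projection (R : zmodType) (mul : R -> R -> R) (star : R -> R)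
  (e : R) : Prop := e = star e /\ e = mul e e.

Definition rann (R : zmodType) (mul : R -> R -> R) (a : R) : R -> Prop :=
  fun b => mul a b = 0.

Definition rmulset (R : zmodType) (mul : R -> R -> R) (g : R) : R -> Prop :=
  fun b => exists y, b = mul g y.

Definition set_eq (R : Type) (A B : R -> Prop) : Prop := forall b, A b <-> B b.

Definition gen_rickart (R : zmodType) (mul : R -> R -> R) (star : R -> R) : Prop :=
  forall x : R, exists n : nat, exists g : R,
    (0 < n)%N /\ is_projection mul star g /\
    set_eq (rann mul (rpow mul x n)) (rmulset mul g).

Definition has_unity (R : zmodType) (mul : R -> R -> R) : Prop :=
  exists u : R, forall x, mul u x = x /\ mul x u = x.

(* Main.v *)
Require Import Defs.
From mathcomp Require Import all_boot all_algebra.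
Import GRing.Theory.
Local Open Scope ring_scope.
Set Implicit Arguments.

Lemma dbl0 (R : zmodType) (x : R) : x = x + x -> x = 0.
Proof. by move=> h; apply: (addrI x); rewrite addr0 -h. Qed.

Section H.
Variables (R : zmodType) (mul : R -> R -> R) (star : R -> R).
Hypothesis HR : star_rng mul star.

Lemma mul0x y : mul 0 y = 0.
Proof.
case: HR => _ [_ [Hd _]].
have := Hd 0 0 y; rewrite addr0; exact: dbl0.
Qed.

Lemma mulx0 y : mul y 0 = 0.
Proof.
case: HR => _ [Hd _].
have := Hd y 0 0; rewrite addr0; exact: dbl0.
Qed.

Lemma mulxN x y : mul x (- y) = - mul x y.
Proof.
case: HR => _ [Hd _].
apply/eqP; rewrite -addr_eq0 -Hd addrC subrr; exact/eqP/mulx0.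
Qed.

Lemma mulNx x y : mul (- x) y = - mul x y.
Proof.
case: HR => _ [_ [Hd _]].
apply/eqP; rewrite -addr_eq0 -Hd addrC subrr; exact/eqP/mul0x.
Qed.

Lemma starN x : star (- x) = - star x.
Proof.
case: HR => _ [_ [_ [Hs _]]].
have s0 : star 0 = 0.
  have := Hs 0 0; rewrite addr0; exact: dbl0.
apply/eqP; rewrite -addr_eq0 -Hs addrC subrr s0 //.
Qed.

Lemma key u g : (forall x, mul u x = x /\ mul x u = x) ->
  is_projection mul star g ->
  is_projection mul star (u - g) /\
  forall b, rmulset mul g b <-> rann mul (u - g) b.
Proof.
move=> Hu [gs gg].
case: HR => Ha [Hdr [Hdl [Hs [Hm Hss]]]].
have su : star u = u.
  have h : mul (star u) u = u.
    by rewrite -[in X in mul _ X](Hss u) -Hm (proj2 (Hu _)) Hss.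
  by rewrite (proj2 (Hu _)) in h.
split; last first.
  move=> b; rewrite /rmulset /rann Hdl mulNx (proj1 (Hu _)); split.
    by case=> y ->; rewrite Ha -gg subrr.
  by move/eqP; rewrite subr_eq0 => /eqP ->; exists b.
split.
  by rewrite Hs starN su -gs.
rewrite Hdl !Hdr !mulNx !mulxN (proj1 (Hu _)) (proj2 (Hu _)) (proj1 (Hu _)) -gg opprK.
by rewrite addrA subrK.
Qed.

Lemma rpow0 n : rpow mul 0 n = 0.
Proof. rewrite /rpow; elim: n.-1 => //= k ->; exact: mul0x. Qed.

End H.

Theorem mainTheorem7 (R : zmodType) (mul : R -> R -> R) (star : R -> R)
  (HR : star_rng mul star) :
  gen_rickart mul star <->
  (has_unity mul /\
   forall x : R, exists e : R, exists n : nat,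
     is_projection mul star e /\ (0 < n)%N /\
     set_eq (rann mul (rpow mul x n)) (rann mul e)).
Proof.
have HR' := HR.
case: HR' => Ha [Hdr [Hdl [Hs [Hm Hss]]]].
split.
  move=> G.
  have [u Hu] : has_unity mul.
    have [n [g [n0 [[gs gg] Hg]]]] := G 0.
    have lu : forall y, mul g y = y.
      move=> y; have [z ->] : rmulset mul g y.
        by apply/Hg; rewrite /rann (rpow0 HR) (mul0x HR).
      by rewrite Ha -gg.
    exists g => y; split; first exact: lu.
    by rewrite -[mul y g]Hss Hm -gs lu Hss.
  split; first by exists u.
  move=> x; have [n [g [n0 [Pg Hg]]]] := G x.
  have [Pe He] := @key _ _ _ HR u _ Hu Pg.
  exists (u - g), n; split=> //; split=> // b.
  by split=> h; [apply/He/Hg | apply/Hg/He].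
case=> [[u Hu] H] x.
have [e [n [Pe [n0 He]]]] := H x.
have [Pg Hg] := @key _ _ _ HR u _ Hu Pe.
exists n, (u - e); split=> //; split=> // b.
have [_ Hk] := @key _ _ _ HR u _ Hu Pg.
have E : u - (u - e) = e by rewrite opprB addrC subrK.
rewrite E in Hk.
by split=> h; [apply/Hk/He | apply/He/Hk].
Qed.
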